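(* Let $A$ be an abelian $p$-group, $a\in A$ and $\varphi$ an endomorphism of $A$. (1) If $\varphi$ is inertial or left-inertial, then the cyclic $\mathbb{Z}[\varphi]$-submodule $\mathbb{Z}[\varphi]a$ of $A$ generated by $a$ is finite. (2) If $|X/X_{(\varphi)}|<\infty$ for all subgroups $X\le A$, then $|X^{(\varphi)}/X|<\infty$ for all subgroups $X\le A$. (3) If there is an integer $m\ge0$ with $|X/X_{(\varphi)}|\le p^m$ for all subgroups $X\le A$, then $|X^{(\varphi)}/X|\le p^{m^2}$ for all subgroups $X\le A$.
   Context: Abelian groups are written additively. An endomorphism $\varphi$ of $A$ is inertial if $(\varphi(X)+X)/X$ is finite for every subgroup $X\le A$, and left-inertial if $X/(X\cap\varphi(X))$ is finite for every $X\le A$. For $X\le A$, $X^{(\varphi)}=\mathbb{Z}[\varphi]X$ is the smallest $\varphi$-invariant subgroup containing $X$, and $X_{(\varphi)}$ is the largest $\varphi$-invariant subgroup contained in $X$. *)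

(* Defs.v *)
(* Abelian groups are zmodTypes; subgroups are Prop-valued
   predicates closed under 0 and subtraction; endomorphisms are additive maps. *)
From mathcomp Require Import all_boot all_algebra.
Set Implicit Arguments. Unset Strict Implicit. Unset Printing Implicit Defensive.
Import GRing.Theory.
Local Open Scope ring_scope.

Section Defs.
Variable A : zmodType.

Definition subgroup (X : A -> Prop) : Prop :=
  X 0 /\ forall x y, X x -> X y -> X (x - y).

Definition p_group (p : nat) : Prop :=
  forall a : A, exists n : nat, a *+ (p ^ n)%N = 0.

Definition img (phi : A -> A) (X : A -> Prop) : A -> Prop :=
  fun y => exists x, X x /\ y = phi x.
Definition sumg (X Y : A -> Prop) : A -> Prop :=
  fun z => exists x y, X x /\ Y y /\ z = x + y.
Definition capg (X Y : A -> Prop) : A -> Prop := fun z => X z /\ Y z.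

Definition invariant (phi : A -> A) (Y : A -> Prop) : Prop :=
  forall y, Y y -> Y (phi y).

(* X^(phi) = Z[phi]X : smallest phi-invariant subgroup containing X *)
Definition inv_closure (phi : A -> A) (X : A -> Prop) : A -> Prop :=
  fun a => forall Y, subgroup Y -> invariant phi Y ->
             (forall x, X x -> Y x) -> Y a.

Definition inv_core (phi : A -> A) (X : A -> Prop) : A -> Prop :=
  fun a => exists Y, [/\ subgroup Y, invariant phi Y,
                        (forall y, Y y -> X y) & Y a].

(* |X / Y| <= N : any family of elements of X pairwise incongruent modulo Y
   has at most N members (the cosets of (X cap Y) in X number at most N). *)
Definition quot_card_le (X Y : A -> Prop) (N : nat) : Prop :=
  forall (n : nat) (f : nat -> A),
    (forall i, (i < n)%N -> X (f i)) ->
    (forall i j, (i < n)%N -> (j < n)%N -> Y (f i - f j) -> i = j) ->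
    (n <= N)%N.

Definition quot_finite (X Y : A -> Prop) : Prop := exists N, quot_card_le X Y N.

Definition finite_set (S : A -> Prop) : Prop :=
  exists s : seq A, forall x, S x -> x \in s.

Definition inertial (phi : A -> A) : Prop :=
  forall X, subgroup X -> quot_finite (sumg (img phi X) X) X.

Definition left_inertial (phi : A -> A) : Prop :=
  forall X, subgroup X -> quot_finite X (capg X (img phi X)).

End Defs.

(* Main.v *)
Require Import Defs.
From mathcomp Require Import all_boot all_algebra.
From mathcomp Require Import zify.
From Stdlib Require Import ClassicalEpsilon.
Set Implicit Arguments. Unset Strict Implicit. Unset Printing Implicit Defensive.
Import GRing.Theory Num.Theory.
Local Open Scope ring_scope.
Section Gen.
Variable A : zmodType.
Implicit Types X Y Z W C : A -> Prop.

Lemma sg0 X : subgroup X -> X 0. Proof. by case. Qed.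
Lemma sgB X x y : subgroup X -> X x -> X y -> X (x - y).
Proof. by case=> _; apply. Qed.
Lemma sgN X x : subgroup X -> X x -> X (- x).
Proof. by move=> sX Xx; rewrite -sub0r; apply: sgB => //; apply: sg0. Qed.
Lemma sgD X x y : subgroup X -> X x -> X y -> X (x + y).
Proof. by move=> sX Xx Xy; rewrite -[y]opprK; apply: sgB => //; apply: sgN. Qed.
Lemma sgMn X x n : subgroup X -> X x -> X (x *+ n).
Proof.
move=> sX Xx; elim: n => [|n IH]; first by rewrite mulr0n; apply: sg0.
by rewrite mulrS; apply: sgD.
Qed.
Lemma sgMz X x z : subgroup X -> X x -> X (x *~ z).
Proof.
move=> sX Xx; case: z => n /=; first exact: sgMn.
by apply: sgN => //; apply: sgMn.
Qed.
Lemma sg_sum X n (F : nat -> A) : subgroup X -> (forall i, (i < n)%N -> X (F i)) ->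
  X (\sum_(i < n) F i).
Proof.
move=> sX HF; apply: (big_ind X); [exact: sg0| by move=> ? ? ? ?; apply: sgD|].
by move=> i _; apply: HF.
Qed.

Lemma choice_nat (P : nat -> A -> Prop) n :
  (forall i, (i < n)%N -> exists x, P i x) ->
  exists g : nat -> A, forall i, (i < n)%N -> P i (g i).
Proof.
move=> H.
have H' : forall i, exists x, (i < n)%N -> P i x.
  move=> i; case: (ltnP i n) => h.
    by have [x Hx] := H i h; exists x.
  by exists 0.
exists (fun i => proj1_sig (constructive_indefinite_description _ (H' i))).
by move=> i hi; exact: (proj2_sig (constructive_indefinite_description _ (H' i)) hi).
Qed.

Lemma inj_bound n m (h : nat -> nat) :
  (forall i, (i < n)%N -> (h i < m)%N) ->
  (forall i j, (i < n)%N -> (j < n)%N -> h i = h j -> i = j) -> (n <= m)%N.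
Proof.
move=> hm hinj.
have U : uniq (map h (iota 0 n)).
  rewrite map_inj_in_uniq ?iota_uniq // => i j; rewrite !mem_iota /= !add0n.
  exact: hinj.
have := uniq_leq_size U (s2 := iota 0 m); rewrite size_map !size_iota; apply.
by move=> y /mapP [i]; rewrite mem_iota /= add0n => hi ->; rewrite mem_iota /= add0n hm.
Qed.

Lemma cover_bound Z X (L : seq A) : subgroup X ->
  (forall z, Z z -> exists2 w, w \in L & X (z - w)) -> quot_card_le Z X (size L).
Proof.
move=> sX hc n f fZ finj.
have [g Hg] := choice_nat (P := fun i w => w \in L /\ X (f i - w)) (n := n)
  (fun i hi => let: ex_intro2 w h1 h2 := hc _ (fZ i hi) in ex_intro _ w (conj h1 h2)).
apply: (inj_bound (h := fun i => index (g i) L)).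
  by move=> i hi; rewrite index_mem; case: (Hg i hi).
move=> i j hi hj he; apply: finj => //.
have eg : g i = g j.
  by rewrite -(nth_index 0 (proj1 (Hg i hi))) he nth_index //; case: (Hg j hj).
have -> : f i - f j = (f i - g i) - (f j - g j).
  by rewrite eg opprB addrA subrK.
by apply: sgB => //; [case: (Hg i hi) | case: (Hg j hj)].
Qed.

Definition good Z C (s : seq A) :=
  (forall w, w \in s -> Z w) /\
  forall i j, (i < size s)%N -> (j < size s)%N -> C (nth 0 s i - nth 0 s j) -> i = j.

Lemma good_size Z C N s : quot_card_le Z C N -> good Z C s -> (size s <= N)%N.
Proof.
by move=> H [h1 h2]; apply: (H _ (nth 0 s)) => // i hi; apply: h1; apply: mem_nth.
Qed.

Lemma reps Z C N : subgroup C -> quot_card_le Z C N ->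
  exists L : seq A, [/\ (size L <= N)%N, (forall w, w \in L -> Z w) &
     forall z, Z z -> exists2 w, w \in L & C (z - w)].
Proof.
move=> sC H.
suff main : forall k s, good Z C s -> (N - size s <= k)%N -> exists L : seq A,
   [/\ (size L <= N)%N, (forall w, w \in L -> Z w) &
     forall z, Z z -> exists2 w, w \in L & C (z - w)].
  by apply: (main N [::]); [split=> // i j|rewrite subn0].
have ext : forall s, good Z C s -> ~ (forall z, Z z -> exists2 w, w \in s & C (z - w)) ->
    exists z, good Z C (z :: s).
  move=> s gs hc.
  have [z [Zz nz]] : exists z, Z z /\ ~ exists2 w, w \in s & C (z - w).
    apply: NNPP => hn; apply: hc => z Zz; apply: NNPP => hw; apply: hn; exists z.
    by split.
  exists z; case: gs => g1 g2; split.
    by move=> w; rewrite in_cons => /orP [/eqP ->|]; [|apply: g1].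
  case=> [|i] [|j] //= hi hj hC.
  - by exfalso; apply: nz; exists (nth 0 s j) => //; rewrite mem_nth.
  - exfalso; apply: nz; exists (nth 0 s i); rewrite ?mem_nth //.
    by rewrite -opprB; apply: sgN.
  - by congr S; apply: g2.
elim=> [|k IH] s gs hk;
  (case: (classic (forall z, Z z -> exists2 w, w \in s & C (z - w))) => hc;
   [by exists s; split=> //; [exact: good_size gs| case: gs] |]);
  have [z gs'] := ext s gs hc; have := good_size H gs'; rewrite /=.
  by move=> h; move: hk; lia.
by move=> h; apply: (IH _ gs'); rewrite /=; lia.
Qed.

Lemma qcl_mono Z Y N N' : (N <= N')%N -> quot_card_le Z Y N -> quot_card_le Z Y N'.
Proof. by move=> hN H n f h1 h2; exact: leq_trans (H n f h1 h2) hN. Qed.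

Lemma qcl_sub Z Z' Y N : (forall z, Z' z -> Z z) -> quot_card_le Z Y N ->
  quot_card_le Z' Y N.
Proof. by move=> hs H n f h1 h2; apply: (H n f) => // i hi; apply: hs; apply: h1. Qed.

Lemma qcl_mul Z Y X N1 N2 : subgroup Y -> subgroup X ->
  quot_card_le Z Y N1 -> quot_card_le Y X N2 -> quot_card_le Z X (N1 * N2).
Proof.
move=> sY sX H1 H2.
have [L1 [s1 _ c1]] := reps sY H1; have [L2 [s2 _ c2]] := reps sX H2.
apply: (qcl_mono (N := size [seq w1 + w2 | w1 <- L1, w2 <- L2])).
  by rewrite size_allpairs leq_mul.
apply: cover_bound => // z Zz.
have [w1 i1 Y1] := c1 z Zz; have [w2 i2 X2] := c2 _ Y1.
by exists (w1 + w2); [apply: allpairs_f | rewrite opprD addrA].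
Qed.

Lemma qcl_transfer Z Y W C N (R : A -> A -> Prop) : quot_card_le W C N ->
  (forall y, Z y -> exists x, W x /\ R y x) ->
  (forall y y' x x', R y x -> R y' x' -> C (x - x') -> Y (y - y')) ->
  quot_card_le Z Y N.
Proof.
move=> H hex hR n f fZ finj.
have [g Hg] := choice_nat (P := fun i x => W x /\ R (f i) x) (n := n)
  (fun i hi => hex _ (fZ i hi)).
apply: (H n g); first by move=> i hi; case: (Hg i hi).
move=> i j hi hj hC; apply: finj => //.
by apply: (hR _ _ (g i) (g j)) => //; [case: (Hg i hi)|case: (Hg j hj)].
Qed.

Definition sumgS := sumg.

Lemma sumg_subgroup X Y : subgroup X -> subgroup Y -> subgroup (sumg X Y).
Proof.
move=> sX sY; split; first by exists 0, 0; rewrite addr0; split; [apply: sg0|split; [apply: sg0|]].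
move=> _ _ [x1 [y1 [X1 [Y1 ->]]]] [x2 [y2 [X2 [Y2 ->]]]].
exists (x1 - x2), (y1 - y2); split; [exact: sgB|split; [exact: sgB|]].
by rewrite opprD addrACA.
Qed.

Variable phi : {additive A -> A}.

Lemma sumg_inv X Y : @Defs.invariant A phi X -> @Defs.invariant A phi Y -> @Defs.invariant A phi (sumg X Y).
Proof.
move=> iX iY _ [x [y [Xx [Yy ->]]]]; exists (phi x), (phi y).
by rewrite raddfD; split; [apply: iX|split; [apply: iY|]].
Qed.

Lemma cl_sub X x : X x -> @inv_closure A phi X x.
Proof. by move=> Xx Y _ _; apply. Qed.
Lemma cl_subgroup X : subgroup (@inv_closure A phi X).
Proof.
split; first by move=> Y sY _ _; apply: sg0.
by move=> x y hx hy Y sY iY hXY; apply: sgB => //; [apply: hx|apply: hy].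
Qed.
Lemma cl_inv X : @Defs.invariant A phi (@inv_closure A phi X).
Proof. by move=> y hy Y sY iY hXY; apply: (iY); exact: (hy Y sY iY hXY). Qed.
Lemma cl_min X Y : subgroup Y -> @Defs.invariant A phi Y -> (forall x, X x -> Y x) ->
  forall y, @inv_closure A phi X y -> Y y.
Proof. by move=> sY iY hXY y hy; exact: (hy Y sY iY hXY). Qed.

Lemma core_sub X y : @inv_core A phi X y -> X y.
Proof. by case=> Y [_ _ h hy]; apply: h. Qed.
Lemma core_inv X : @Defs.invariant A phi (@inv_core A phi X).
Proof. by move=> y [Y [sY iY h hy]]; exists Y; split=> //; apply: iY. Qed.
Lemma core_subgroup X : subgroup X -> subgroup (@inv_core A phi X).
Proof.
move=> sX; split.
  exists (fun y => y = 0); split=> //; first by split=> // x y -> ->; rewrite subr0.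
    by move=> y ->; rewrite raddf0.
  by move=> y ->; apply: sg0.
move=> x y [Y1 [s1 i1 h1 y1]] [Y2 [s2 i2 h2 y2]].
exists (sumg Y1 (fun z => Y2 (- z))); split.
- apply: sumg_subgroup => //; split; first by rewrite oppr0; apply: sg0.
  by move=> a b ha hb; rewrite opprD; apply: sgB.
- apply: sumg_inv => // z hz; by rewrite -raddfN; apply: i2.
- by move=> _ [a [b [ha [hb ->]]]]; rewrite -[b]opprK; apply: sgB => //;
     [apply: h1|apply: h2].
- by exists x, (- y); split=> //; rewrite opprK.
Qed.
Lemma core_iter X l y : @inv_core A phi X y -> X (iter l phi y).
Proof.
move=> hy; apply: core_sub; elim: l => [|l IH] //=; exact: core_inv.
Qed.
End Gen.

Section P1.
Variable A : zmodType.
Variable phi : {additive A -> A}.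
Variable a : A.

Definition bb i := iter i phi a.
Definition comb d (c : nat -> int) : A := \sum_(i < d) bb i *~ c i.
Definition TT y := exists d c, y = comb d c.

Lemma comb0 c : comb 0 c = 0. Proof. by rewrite /comb big_ord0. Qed.
Lemma combS d c : comb d.+1 c = comb d c + bb d *~ c d.
Proof. by rewrite /comb big_ord_recr. Qed.
Lemma comb_ext d c c' : (forall i, (i < d)%N -> c i = c' i) -> comb d c = comb d c'.
Proof.
elim: d => [|d IH] h; first by rewrite !comb0.
by rewrite !combS IH ?h // => i hi; apply: h; apply: ltnW.
Qed.
Lemma comb_zero d : comb d (fun _ => 0) = 0.
Proof. by elim: d => [|d IH]; rewrite ?comb0 // combS IH mulr0z addr0. Qed.
Lemma combB d c c' : comb d c - comb d c' = comb d (fun i => c i - c' i).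
Proof.
elim: d => [|d IH]; first by rewrite !comb0 subr0.
by rewrite !combS -IH mulrzBr opprD addrACA.
Qed.
Lemma combD d c c' : comb d c + comb d c' = comb d (fun i => c i + c' i).
Proof.
elim: d => [|d IH]; first by rewrite !comb0 addr0.
by rewrite !combS -IH mulrzDr addrACA.
Qed.
Lemma combMz d c z : comb d c *~ z = comb d (fun i => c i * z).
Proof.
elim: d => [|d IH]; first by rewrite !comb0 mul0rz.
by rewrite !combS mulrzDl IH mulrzA.
Qed.
Definition pad (c : nat -> int) d i := if (i < d)%N then c i else 0.
Lemma comb_pad d e c : (d <= e)%N -> comb e (pad c d) = comb d c.
Proof.
move=> /subnKC <-; elim: (e - d)%N => [|k IH].
  by rewrite addn0; apply: comb_ext => i hi; rewrite /pad hi.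
by rewrite addnS combS IH /pad ltnNge leq_addr /= mulr0z addr0.
Qed.
Definition delta (k i : nat) : int := if i == k then 1 else 0.
Lemma comb_delta k d : (k < d)%N -> comb d (delta k) = bb k.
Proof.
elim: d => [|d IH] //; rewrite ltnS leq_eqVlt => /orP [/eqP ->|hk].
  rewrite combS /delta eqxx mulr1z (_ : comb d _ = 0) ?add0r //.
  rewrite -(comb_zero d); apply: comb_ext => i hi.
  by rewrite (_ : (i == d) = false) //; apply/negbTE; rewrite neq_ltn hi.
rewrite combS IH // /delta (_ : (d == k) = false) ?mulr0z ?addr0 //.
by apply/negbTE; rewrite neq_ltn hk orbT.
Qed.
Definition sh (c : nat -> int) i := if i is i'.+1 then c i' else 0.
Lemma comb_phi d c : phi (comb d c) = comb d.+1 (sh c).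
Proof.
elim: d => [|d IH]; first by rewrite comb0 raddf0 combS comb0 /= mulr0z addr0.
by rewrite combS raddfD IH raddfMz [in RHS]combS.
Qed.

Lemma TT_subgroup : subgroup TT.
Proof.
split; first by exists 0%N, (fun _ => 0); rewrite comb0.
move=> _ _ [d [c ->]] [d' [c' ->]].
exists (maxn d d'), (fun i => pad c d i - pad c' d' i).
by rewrite -combB !comb_pad ?leq_maxl ?leq_maxr.
Qed.
Lemma TT_inv : Defs.invariant phi TT.
Proof. by move=> _ [d [c ->]]; exists d.+1, (sh c); rewrite comb_phi. Qed.
Lemma TT_bb i : TT (bb i).
Proof. by exists i.+1, (delta i); rewrite comb_delta. Qed.
Lemma TT_min Y : subgroup Y -> Defs.invariant phi Y -> Y a -> forall y, TT y -> Y y.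
Proof.
move=> sY iY Ya _ [d [c ->]]; rewrite /comb; apply: (sg_sum (F := fun i => bb i *~ c i)) => // i _; apply: sgMz => //.
by elim: (i : nat) => [|j IH] //=; apply: iY.
Qed.
Lemma cl_TT y : inv_closure phi (fun x => x = a) y -> TT y.
Proof.
move=> h; apply: (cl_min (phi := phi) TT_subgroup TT_inv) h => x ->.
exact: (TT_bb 0).
Qed.
Lemma TT_Mz t z : TT t -> TT (t *~ z).
Proof. by move=> ht; apply: sgMz => //; apply: TT_subgroup. Qed.

Lemma bez (p : nat) (x : int) : prime p -> ~~ (p%:Z %| x)%Z ->
  exists u v : int, u * x + v * p%:Z = 1.
Proof.
move=> hp hx; case: (Bezoutz x p%:Z) => u [v e]; exists u, v; rewrite e /gcdz.
have : coprime p `|x|%N by rewrite prime_coprime // -[p]/(`|p%:Z|%N) -dvdzE.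
by rewrite /coprime gcdnC => /eqP ->.
Qed.

Lemma TT_tors q y : a *+ q = 0 -> TT y -> y *+ q = 0.
Proof.
move=> haq; apply: (TT_min (Y := fun y => y *+ q = 0)) => //.
  split; first by rewrite mul0rn.
  by move=> x z hx hz; rewrite mulrnBl hx hz subr0.
by move=> x hx; rewrite -raddfMn hx raddf0.
Qed.

Fixpoint FF (q e : nat) : seq A := if e is e'.+1 then
  [seq y + bb e' *~ (j%:Z) | y <- FF q e', j <- iota 0 q] else [:: 0].

Lemma comb_FF q e c : a *+ q = 0 -> (0 < q)%N -> comb e c \in FF q e.
Proof.
move=> haq hq; elim: e => [|e IH]; first by rewrite comb0 /= inE.
rewrite combS /=.
have q0 : q%:Z != 0 by rewrite eqz_nat -lt0n.
have hb : bb e *~ c e = bb e *~ (`|(c e %% q%:Z)%Z|%N)%:Z.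
  rewrite gez0_abs ?modz_ge0 //.
  rewrite {1}(divz_eq (c e) q%:Z) mulrzDr mulrzA.
  rewrite (_ : bb e *~ (c e %/ q)%Z *~ q%:Z = 0) ?add0r //.
  by apply: (TT_tors haq); apply: TT_Mz; apply: TT_bb.
rewrite hb; apply: allpairs_f => //.
rewrite mem_iota /= add0n.
have : (c e %% q%:Z < q%:Z)%Z by apply: ltz_pmod; rewrite ltz_nat.
have : (0 <= c e %% q%:Z)%Z by exact: modz_ge0.
lia.
Qed.

Section CaseA.
Variables (p d : nat) (c : nat -> int).
Hypotheses (hp : prime p) (hpg : p_group A p) (hcd : ~~ (p%:Z %| c d)%Z).
Variable t0 : A.
Hypotheses (ht0 : TT t0) (hc : comb d.+1 c = t0 *+ p).

Definition SS k y := exists c' t, TT t /\ y = comb d c' + t *+ (p ^ k).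

Lemma SS_subgroup k : subgroup (SS k).
Proof.
split; first by exists (fun _ => 0), 0; split; [apply: sg0; apply: TT_subgroup|];
  rewrite comb_zero mul0rn addr0.
move=> _ _ [c1 [t1 [T1 ->]]] [c2 [t2 [T2 ->]]].
exists (fun i => c1 i - c2 i), (t1 - t2); split; first by apply: sgB => //; apply: TT_subgroup.
by rewrite -combB mulrnBl opprD addrACA.
Qed.

Lemma SS_key : SS 1 (bb d).
Proof.
have [u [v e]] := bez hp hcd.
have E1 : bb d *~ c d = t0 *+ p - comb d c.
  by rewrite -hc combS [comb d c + _]addrC addrK.
exists (fun i => c i * (- u)), (t0 *~ u + bb d *~ v); split.
  by apply: sgD; [apply: TT_subgroup|apply: TT_Mz|apply: TT_Mz; apply: TT_bb].
have -> : comb d (fun i => c i * - u) = - (comb d c *~ u) by rewrite -combMz mulrNz.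
have e2 : bb d = (bb d *~ c d) *~ u + (bb d *~ v) *~ p%:Z.
  by rewrite -!mulrzA (mulrC (c d) u) -mulrzDr e mulr1z.
have e3 : (t0 *+ p) *~ u = (t0 *~ u) *+ p.
  by change ((t0 *~ p%:Z) *~ u = (t0 *~ u) *~ p%:Z); rewrite -!mulrzA (mulrC u).
rewrite {1}e2 E1 mulrzBl expn1 mulrnDl e3.
change (t0 *~ u *+ p - comb d c *~ u + bb d *~ v *+ p =
  - (comb d c *~ u) + (t0 *~ u *+ p + bb d *~ v *+ p)).
by rewrite addrA (addrC (t0 *~ u *+ p)).
Qed.

Lemma SS1_inv : Defs.invariant phi (SS 1).
Proof.
move=> _ [c' [t [Tt ->]]].
rewrite raddfD comb_phi combS raddfMn -addrA [bb d *~ _ + _]addrC addrA.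
apply: sgD; first exact: SS_subgroup.
  by exists (sh c'), (phi t); split => //; apply: TT_inv.
by apply: sgMz; [apply: SS_subgroup|apply: SS_key].
Qed.

Lemma SS1_a : SS 1 a.
Proof.
case: (posnP d) => [d0|dpos].
  by have := SS_key; rewrite d0.
exists (delta 0), 0; split; first by apply: sg0; apply: TT_subgroup.
by rewrite comb_delta // mul0rn addr0.
Qed.

Lemma TT_SS1 y : TT y -> SS 1 y.
Proof. exact: TT_min (SS_subgroup 1) SS1_inv SS1_a y. Qed.

Lemma TT_SS k y : TT y -> SS k y.
Proof.
elim: k y => [|k IH] y Ty.
  by exists (fun _ => 0), y; split => //; rewrite comb_zero add0r expn0.
have [c1 [t1 [T1 ->]]] := IH y Ty.
have [c2 [t2 [T2 ->]]] := TT_SS1 T1.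
exists (fun i => c1 i + c2 i * (p ^ k)%:Z), t2; split => //.
rewrite -combD -combMz mulrnDl -addrA; congr (_ + _); congr (_ + _).
by rewrite expn1 -mulrnA -expnS.
Qed.

Lemma caseA_fin : finite_set (inv_closure phi (fun x => x = a)).
Proof.
have [n hn] := hpg a.
have hq : (0 < p ^ n)%N by rewrite expn_gt0 prime_gt0.
exists (FF (p ^ n) d) => y /cl_TT Ty.
have [c' [t [Tt ->]]] := TT_SS n Ty.
by rewrite (TT_tors hn Tt) addr0; apply: comb_FF.
Qed.
End CaseA.

Section CaseB.
Variable p : nat.
Hypothesis hp : prime p.
Definition pT y := exists t, TT t /\ y = t *+ p.
Hypothesis hnr : forall d c, ~~ (p%:Z %| c d)%Z -> ~ pT (comb d.+1 c).

Lemma free D c : pT (comb D c) -> forall i, (i < D)%N -> (p%:Z %| c i)%Z.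
Proof.
elim: D c => [|D IH] c h i //.
have hD : (p%:Z %| c D)%Z.
  by case: (boolP (p%:Z %| c D)%Z) => // hD; exfalso; exact: hnr hD h.
rewrite ltnS leq_eqVlt => /orP [/eqP -> //|hi].
apply: IH hi; case: h => t [Tt et].
have [k ek] := dvdzP hD.
exists (t - bb D *~ k); split; first by apply: sgB; [apply: TT_subgroup| |apply: TT_Mz; apply: TT_bb].
have -> : comb D c = comb D.+1 c - bb D *~ c D by rewrite combS addrK.
by rewrite et ek mulrzA mulrnBl.
Qed.

Definition Epar (par : bool) y := exists D c,
  (forall i, (i < D)%N -> odd i = par -> (p%:Z %| c i)%Z) /\ y = comb D c.

Lemma Epar_subgroup par : subgroup (Epar par).
Proof.
split; first by exists 0%N, (fun _ => 0); rewrite comb0.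
move=> _ _ [D [c [hc ->]]] [D' [c' [hc' ->]]].
exists (maxn D D'), (fun i => pad c D i - pad c' D' i); split.
  move=> i _ hi; apply: rpredB; rewrite /pad.
    by case: ifP => h; [apply: hc|apply: dvdz0].
  by case: ifP => h; [apply: hc'|apply: dvdz0].
by rewrite -combB !comb_pad ?leq_maxl ?leq_maxr.
Qed.

Lemma Epar_phi par x : Epar par x -> Epar (~~ par) (phi x).
Proof.
case=> D [c [hc ->]]; exists D.+1, (sh c); split; last by rewrite comb_phi.
case=> [|i] /= hi ho; first exact: dvdz0.
by apply: hc => //; rewrite -[par]negbK -ho negbK.
Qed.

Lemma Epar_bb par k : odd k != par -> Epar par (bb k).
Proof.
move=> hk; exists k.+1, (delta k); split; last by rewrite comb_delta.
move=> i _ hi; rewrite /delta; case: eqP => [e|_]; last exact: dvdz0.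
by move: hk; rewrite -hi e eqxx.
Qed.

Lemma noE par k l : odd k = par -> l != k -> ~ Epar par (bb k - bb l).
Proof.
move=> hk hlk [D [c [hc e]]].
set E := maxn D (maxn k l).+1.
have kE : (k < E)%N by rewrite /E; lia.
have lE : (l < E)%N by rewrite /E; lia.
have h0 : pT (comb E (fun i => (pad c D i - delta k i) + delta l i)).
  exists 0; split; first by apply: sg0; apply: TT_subgroup.
  rewrite -combD -combB comb_pad ?leq_maxl // !comb_delta // -e mul0rn.
  by rewrite [bb k - bb l]addrC addrK addNr.
have hkl : (k == l) = false by rewrite eq_sym; exact: negbTE.
have := free h0 kE; rewrite /delta eqxx hkl => hd.
have hpad : (p%:Z %| pad c D k)%Z.
  by rewrite /pad; case: ifP => h; [apply: hc|apply: dvdz0].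
have : (p%:Z %| 1)%Z.
  have e1 : pad c D k - (pad c D k - 1 + 0) = 1 by rewrite addr0 opprB addrC subrK.
  by have h2 := rpredB hpad hd; rewrite e1 in h2.
rewrite dvdz1 /= => /eqP hp1; move: hp; rewrite hp1.
by [].
Qed.

Lemma caseB_inert : ~ inertial phi.
Proof.
move=> H; have [N HN] := H (Epar true) (Epar_subgroup true).
suff : (N.+1 <= N)%N by rewrite ltnn.
apply: (HN N.+1 (fun i => bb (i.*2.+1))).
  move=> i _; exists (phi (bb i.*2)), 0; split.
    by exists (bb i.*2); split => //; apply: Epar_bb; rewrite odd_double.
  by split; [apply: sg0; apply: Epar_subgroup | rewrite addr0].
move=> i j _ _ hE; case: (eqVneq i j) => // hij; exfalso.
apply: (noE (par := true) (k := i.*2.+1) (l := j.*2.+1)) => //=.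
  by rewrite odd_double.
by rewrite eqSS -!muln2 eqn_pmul2r // eq_sym.
Qed.

Lemma caseB_left : ~ left_inertial phi.
Proof.
move=> H; have [N HN] := H (Epar true) (Epar_subgroup true).
suff : (N.+1 <= N)%N by rewrite ltnn.
apply: (HN N.+1 (fun i => bb (i.*2))).
  by move=> i _; apply: Epar_bb; rewrite odd_double.
move=> i j _ _ [_ [x [Ex e]]]; case: (eqVneq i j) => // hij; exfalso.
have := Epar_phi Ex; rewrite -e /=.
apply: noE; first by rewrite odd_double.
by rewrite -!muln2 eqn_pmul2r // eq_sym.
Qed.
End CaseB.

Lemma part1 p : prime p -> p_group A p -> inertial phi \/ left_inertial phi ->
  finite_set (inv_closure phi (fun x => x = a)).
Proof.
move=> hp hpg hin.
case: (classic (exists d c, ~~ (p%:Z %| c d)%Z /\ pT p (comb d.+1 c))).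
  move=> [d [c [hcd [t [Tt ht]]]]]; exact: (caseA_fin hp hpg hcd Tt ht).
move=> hn; exfalso.
have hnr : forall d c, ~~ (p%:Z %| c d)%Z -> ~ pT p (comb d.+1 c).
  by move=> d c h1 h2; apply: hn; exists d, c.
by case: hin; [apply: caseB_inert hp hnr | apply: caseB_left hp hnr].
Qed.
End P1.

Section P2.
Variable A : zmodType.
Variable phi : {additive A -> A}.
Implicit Types X Y : A -> Prop.

Lemma grp1 (a b c d : A) : a - c - (b - d) + (c - d) = a - b.
Proof. by rewrite opprB -addrA (addrC (d - b)) -(addrA c) addKr -addrA addKr. Qed.

Lemma core_inertial :
  (forall X, subgroup X -> quot_finite X (inv_core phi X)) -> inertial phi.
Proof.
move=> H X sX; have [N HN] := H X sX; exists N.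
apply: (qcl_transfer (R := fun y x => X (y - phi x)) HN).
  move=> _ [_ [x' [[x [Xx ->]] [Xx' ->]]]]; exists x; split => //.
  by rewrite addrC addKr.
move=> y y' x x' h1 h2 hC.
rewrite -(grp1 y y' (phi x) (phi x')) -raddfB.
apply: sgD => //; first by apply: sgB.
by apply: core_sub; apply: core_inv.
Qed.

Lemma finite_sumg X Y : finite_set X -> finite_set Y -> finite_set (sumg X Y).
Proof.
move=> [s hs] [t ht]; exists [seq x + y | x <- s, y <- t].
by move=> _ [x [y [Xx [Yy ->]]]]; apply: allpairs_f; [apply: hs|apply: ht].
Qed.

Fixpoint Wf (rs : seq A) : A -> Prop :=
  if rs is r :: rs' then sumg (inv_closure phi (fun x => x = r)) (Wf rs')
  else fun y => y = 0.

Lemma Wf_subgroup rs : subgroup (Wf rs).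
Proof.
elim: rs => [|r rs IH] /=; last by apply: sumg_subgroup => //; apply: cl_subgroup.
by split => // x y -> ->; rewrite subr0.
Qed.
Lemma Wf_inv rs : Defs.invariant phi (Wf rs).
Proof.
elim: rs => [|r rs IH] /=; last by apply: sumg_inv => //; apply: cl_inv.
by move=> y ->; rewrite raddf0.
Qed.
Lemma Wf_mem rs r : r \in rs -> Wf rs r.
Proof.
elim: rs => [|r' rs IH] //=; rewrite in_cons => /orP [/eqP ->|hr].
  exists r', 0; split; first by apply: cl_sub.
  by split; [apply: sg0; apply: Wf_subgroup|rewrite addr0].
exists 0, r; split; first by apply: sg0; apply: cl_subgroup.
by split; [apply: IH|rewrite add0r].
Qed.
Lemma Wf_fin rs : (forall r, finite_set (inv_closure phi (fun x => x = r))) ->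
  finite_set (Wf rs).
Proof.
move=> hf; elim: rs => [|r rs IH] /=; last by apply: finite_sumg.
by exists [:: 0] => y ->; rewrite inE.
Qed.

Lemma part2 p : prime p -> p_group A p ->
  (forall X, subgroup X -> quot_finite X (inv_core phi X)) ->
  forall X, subgroup X -> quot_finite (inv_closure phi X) X.
Proof.
move=> hp hpg H2 X sX.
have [N HN] := H2 X sX.
have [L [_ LX Lc]] := reps (core_subgroup phi sX) HN.
have fin r : finite_set (inv_closure phi (fun x => x = r)).
  by apply: part1 hp hpg _; left; apply: core_inertial.
have [s hs] := Wf_fin L fin.
have hV : forall z, inv_closure phi X z -> sumg (inv_core phi X) (Wf L) z.
  apply: cl_min.
  - by apply: sumg_subgroup; [apply: core_subgroup|apply: Wf_subgroup].
  - by apply: sumg_inv; [apply: core_inv|apply: Wf_inv].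
  - move=> x Xx; have [w wL hw] := Lc x Xx.
    exists (x - w), w; split => //; split; [by apply: Wf_mem | by rewrite subrK].
exists (size s); apply: cover_bound => // z hz.
have [c [w [hc [hw ->]]]] := hV z hz.
by exists w; [apply: hs | rewrite addrK; apply: core_sub hc].
Qed.
End P2.

Section P3.
Variable A : zmodType.
Variable phi : {additive A -> A}.
Implicit Types X Y : A -> Prop.

Lemma img_subgroup Y : subgroup Y -> subgroup (img phi Y).
Proof.
move=> sY; split; first by exists 0; split; [apply: sg0|rewrite raddf0].
by move=> _ _ [x [Xx ->]] [y [Yy ->]]; exists (x - y); split; [apply: sgB|rewrite raddfB].
Qed.

Fixpoint Xk X k : A -> Prop := if k is k'.+1 then sumg X (img phi (Xk X k')) else X.

Variable X : A -> Prop.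
Hypothesis sX : subgroup X.

Lemma Xk_subgroup k : subgroup (Xk X k).
Proof. by elim: k => [|k IH] //=; apply: sumg_subgroup => //; apply: img_subgroup. Qed.

Lemma X_Xk k x : X x -> Xk X k x.
Proof.
case: k => [|k] //= Xx; exists x, 0; split => //; split; last by rewrite addr0.
by exists 0; split; [apply: sg0; apply: Xk_subgroup|rewrite raddf0].
Qed.

Lemma Xk_mono k y : Xk X k y -> Xk X k.+1 y.
Proof.
elim: k y => [|k IH] y /=; first by move=> Xy; apply: (X_Xk 1).
move=> [x [_ [Xx [[z [hz ->]] ->]]]]; exists x, (phi z); split => //; split => //.
by exists z; split => //; apply: IH.
Qed.

Lemma Xk_le k l y : (k <= l)%N -> Xk X k y -> Xk X l y.
Proof.
move=> /subnKC <-; elim: (l - k)%N => [|j IH] h; first by rewrite addn0.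
by rewrite addnS; apply: Xk_mono; apply: IH.
Qed.

Lemma Xk_phi k y : Xk X k y -> Xk X k.+1 (phi y).
Proof.
move=> h; exists 0, (phi y); split; first exact: sg0.
by split; [exists y|rewrite add0r].
Qed.

Lemma Xk_iter0 j x : X x -> Xk X j (iter j phi x).
Proof. by move=> Xx; elim: j => [|j IH] //=; apply: Xk_phi. Qed.

Lemma Xk_iter k j x : X x -> (j <= k)%N -> Xk X k (iter j phi x).
Proof. by move=> Xx hj; apply: Xk_le hj _; apply: Xk_iter0. Qed.

Lemma iterB n (u v : A) : iter n phi (u - v) = iter n phi u - iter n phi v.
Proof. by elim: n => [|n IH] //=; rewrite IH raddfB. Qed.
Lemma iterDl n (u v : A) : iter n phi (u + v) = iter n phi u + iter n phi v.
Proof. by elim: n => [|n IH] //=; rewrite IH raddfD. Qed.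
Lemma iterMz n (u : A) z : iter n phi (u *~ z) = iter n phi u *~ z.
Proof. by elim: n => [|n IH] //=; rewrite IH raddfMz. Qed.

Lemma Xk_decomp k y : Xk X k.+1 y ->
  exists x, X x /\ Xk X k (y - iter k.+1 phi x).
Proof.
elim: k y => [|k IH] y [x0 [_ [Xx0 [[z [hz ->]] ->]]]].
  by exists z; split => //=; rewrite addrK.
have [x [Xx hx]] := IH z hz.
exists x; split => //; exists x0, (phi (z - iter k.+1 phi x)); split => //.
split; first by exists (z - iter k.+1 phi x).
by rewrite raddfB addrA.
Qed.

Lemma step_bound N k : quot_card_le X (inv_core phi X) N ->
  quot_card_le (Xk X k.+1) (Xk X k) N.
Proof.
move=> H.
apply: (qcl_transfer (R := fun y x => Xk X k (y - iter k.+1 phi x)) H).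
  by move=> y hy; apply: Xk_decomp.
move=> y y' x x' h1 h2 hC.
rewrite -(grp1 y y' (iter k.+1 phi x) (iter k.+1 phi x')) -iterB.
apply: sgD; first exact: Xk_subgroup.
  by apply: sgB => //; apply: Xk_subgroup.
by apply: X_Xk; apply: core_iter.
Qed.

Lemma total_bound N k : quot_card_le X (inv_core phi X) N ->
  quot_card_le (Xk X k) X (N ^ k).
Proof.
move=> H; elim: k => [|k IH].
  rewrite expn0 (_ : 1%N = size [:: (0 : A)]) //.
  by apply: cover_bound => // z hz; exists 0; rewrite ?inE // subr0.
rewrite expnS; apply: qcl_mul (Xk_subgroup k) sX _ IH.
exact: step_bound.
Qed.

Lemma escape k j y : Xk X k y -> ~ Xk X (k + j) (iter j.+1 phi y) ->
  exists x, X x /\ ~ Xk X (k + j) (iter (k + j).+1 phi x).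
Proof.
elim: k j y => [|k IH] j y.
  by move=> Xy h; exists y.
move=> [x0 [_ [Xx0 [[z [hz ->]] ->]]]] hn.
have := IH j.+1 z hz; rewrite !addSnnS; apply.
move=> hz'; apply: hn; rewrite iterDl.
apply: sgD; first exact: Xk_subgroup.
  by apply: Xk_iter => //; rewrite ltnS leq_addl.
by rewrite -iterSr addSnnS.
Qed.

Variable p : nat.
Hypothesis hp : prime p.
Hypothesis hpg : p_group A p.

Lemma unit_mul (S : A -> Prop) y (dd : int) : subgroup S -> dd != 0 ->
  (`|dd| < p)%N -> S (y *~ dd) -> S y.
Proof.
move=> sS hne hlt hS.
have [n hn] := hpg y.
have cp : coprime `|dd| p.
  rewrite coprime_sym prime_coprime //; apply/negP => hdv.
  have := dvdn_leq _ hdv; rewrite absz_gt0 hne => /(_ isT); lia.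
have cpn : coprime `|dd| (p ^ n) by apply: coprimeXr.
case: (Bezoutz dd (p ^ n)%:Z) => u [v e].
have e1 : u * dd + v * (p ^ n)%:Z = 1 by rewrite e /gcdz /=; move: cpn => /eqP ->.
have -> : y = (y *~ dd) *~ u + (y *~ (p ^ n)%:Z) *~ v.
  by rewrite -!mulrzA (mulrC dd u) (mulrC _ v) -mulrzDr e1 mulr1z.
have -> : y *~ (p ^ n)%:Z = 0 by exact: hn.
by rewrite mul0rz addr0; apply: sgMz.
Qed.

Section Fam.
Variables (m : nat) (x : A).
Hypotheses (Xx : X x) (hout : ~ Xk X m (iter m.+1 phi x)).

Definition gs s K (d : nat -> int) := \sum_(t < K) iter (t + s) phi x *~ d t.

Lemma gsS s K d : gs s K.+1 d = gs s K d + iter (K + s) phi x *~ d K.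
Proof. by rewrite /gs big_ord_recr. Qed.
Lemma gs0 s d : gs s 0 d = 0.
Proof. by rewrite /gs big_ord0. Qed.
Lemma iter0 n : iter n phi 0 = 0.
Proof. by elim: n => [|n IH] //=; rewrite IH raddf0. Qed.
Lemma gs_iter n s K d : iter n phi (gs s K d) = gs (s + n) K d.
Proof.
elim: K => [|K IH]; first by rewrite !gs0 iter0.
rewrite !gsS iterDl IH iterMz -iterD.
by have -> : (n + (K + s) = K + (s + n))%N by lia.
Qed.
Lemma gsB s K d d' : gs s K d - gs s K d' = gs s K (fun t => d t - d' t).
Proof.
elim: K => [|K IH]; first by rewrite !gs0 subr0.
by rewrite !gsS -IH mulrzBr opprD addrACA.
Qed.

Lemma claim K d : (K <= m.+1)%N -> (forall t, d t != 0 -> (`|d t| < p)%N) ->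
  inv_core phi (Xk X m) (gs 0 K d) -> forall t, (t < K)%N -> d t = 0.
Proof.
elim: K => [|K IH] // hK hd hw.
have hdK : d K = 0.
  case: (eqVneq (d K) 0) => // hne; exfalso; apply: hout.
  apply: (unit_mul (S := Xk X m) (Xk_subgroup _) hne (hd _ hne)).
  have h1 := @core_iter _ _ _ (m - K).+1 _ hw.
  rewrite gs_iter gsS add0n in h1.
  have h2 : Xk X m (gs (m - K).+1 K d).
    rewrite /gs; apply: (sg_sum (F := fun t => iter (t + (m - K).+1) phi x *~ d t)).
      exact: Xk_subgroup.
    move=> t ht; apply: sgMz; first exact: Xk_subgroup.
    by apply: Xk_iter => //; lia.
  have := sgB (Xk_subgroup _) h1 h2; rewrite [_ + _ - _]addrC addKr.
  by have -> : (K + (m - K).+1 = m.+1)%N by lia.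
move=> t; rewrite ltnS leq_eqVlt => /orP [/eqP -> //|ht].
apply: IH => //; first by apply: ltnW.
by rewrite gsS hdK mulr0z addr0 in hw.
Qed.
End Fam.

Lemma digits (q K i j : nat) : (1 < q)%N -> (i < q ^ K)%N -> (j < q ^ K)%N ->
  (forall t, (t < K)%N -> i %/ q ^ t %% q = j %/ q ^ t %% q)%N -> i = j.
Proof.
move=> hq; elim: K i j => [|K IH] i j.
  by rewrite expn0 !ltnS !leqn0 => /eqP -> /eqP ->.
move=> hi hj hd.
have q0 : (0 < q)%N by lia.
rewrite (divn_eq i q) (divn_eq j q).
have := hd 0%N isT; rewrite expn0 !divn1 => ->.
congr (_ * _ + _)%N; apply: IH.
- by rewrite ltn_divLR // -expnSr.
- by rewrite ltn_divLR // -expnSr.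
- by move=> t ht; rewrite -!divnMA -expnS; apply: hd.
Qed.

Lemma no_escape m x : X x -> ~ Xk X m (iter m.+1 phi x) ->
  quot_card_le (Xk X m) (inv_core phi (Xk X m)) (p ^ m) -> False.
Proof.
move=> Xx hout H.
have hp1 : (1 < p)%N by apply: prime_gt1.
suff : (p ^ m.+1 <= p ^ m)%N by rewrite leqNgt ltn_exp2l // ltnSn.
apply: (H (p ^ m.+1)%N (fun i => gs x 0 m.+1 (fun t => (i %/ p ^ t %% p)%N%:Z))).
  move=> i _; rewrite /gs.
  apply: (sg_sum (F := fun t => iter (t + 0) phi x *~ (i %/ p ^ t %% p)%N%:Z)).
    exact: Xk_subgroup.
  move=> t ht; apply: sgMz; first exact: Xk_subgroup.
  by apply: Xk_iter => //; lia.
move=> i j hi hj hC; rewrite gsB in hC.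
apply: (digits hp1 hi hj) => t ht.
have hdd : forall t', ((i %/ p ^ t' %% p)%N%:Z - (j %/ p ^ t' %% p)%N%:Z) != 0 ->
    (`|(i %/ p ^ t' %% p)%N%:Z - (j %/ p ^ t' %% p)%N%:Z| < p)%N.
  move=> t' _.
  have := ltn_pmod (i %/ p ^ t') (ltnW hp1); have := ltn_pmod (j %/ p ^ t') (ltnW hp1).
  lia.
have := claim Xx hout (leqnn _) hdd hC ht.
by move/eqP; rewrite subr_eq0 => /eqP [].
Qed.

Lemma part3_X m : (forall Y, subgroup Y -> quot_card_le Y (inv_core phi Y) (p ^ m)) ->
  quot_card_le (inv_closure phi X) X (p ^ (m ^ 2)).
Proof.
move=> H.
have hinv : Defs.invariant phi (Xk X m).
  move=> y hy; apply: NNPP => hn.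
  have hy' : ~ Xk X (m + 0) (iter 1 phi y) by rewrite addn0.
  have [x [Xx hout]] := escape hy hy'.
  rewrite addn0 in hout.
  exact: no_escape Xx hout (H _ (Xk_subgroup _)).
apply: (qcl_sub (Z := Xk X m)).
  by apply: cl_min => //; [apply: Xk_subgroup|move=> z hz; apply: X_Xk].
rewrite -mulnn expnM; apply: total_bound.
by apply: H.
Qed.
End P3.


Unset Implicit Arguments.

Theorem lemma3p3 (p : nat) (A : zmodType) (phi : {additive A -> A}) :
  prime p -> p_group A p ->
  [/\ (inertial phi \/ left_inertial phi) ->
        forall a : A, finite_set (inv_closure phi (fun x => x = a)),
      (forall X, subgroup X -> quot_finite X (inv_core phi X)) ->
        forall X, subgroup X -> quot_finite (inv_closure phi X) X
    & forall m : nat,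
        (forall X, subgroup X -> quot_card_le X (inv_core phi X) (p ^ m)) ->
        forall X, subgroup X -> quot_card_le (inv_closure phi X) X (p ^ (m ^ 2))].
Proof.
move=> hp hpg; split.
- by move=> h a; exact: (part1 a hp hpg h).
- by move=> H X sX; exact: (part2 hp hpg H sX).
- by move=> m H X sX; exact: (part3_X sX hp hpg H).
Qed.
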